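(* Let $G$ be a torsion-free finitely generated residually finite group and $\phi\in\operatorname{Aut}(G)$. If $R(\phi)<\infty$, then $\operatorname{Stab}_\phi(g)=1$ for all $g\in G$.
   Context: For an endomorphism $\phi$ of $G$, $R(\phi)\in\mathbb{N}\cup\{\infty\}$ is the number of classes of the relation $x\sim hx\phi(h)^{-1}$ ($h\in G$). The $\phi$-stabiliser of $g\in G$ is $\operatorname{Stab}_\phi(g)=\{b\in G\mid g=bg\phi(b)^{-1}\}$. *)

(* Defs.v *)
From Stdlib Require Import List.
Import ListNotations.

Record Group := {
  carrier :> Type;
  gmul : carrier -> carrier -> carrier;
  gone : carrier;
  ginv : carrier -> carrier;
  gmul_assoc : forall x y z, gmul x (gmul y z) = gmul (gmul x y) z;
  gmul_1l : forall x, gmul gone x = x;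
  gmul_1r : forall x, gmul x gone = x;
  gmul_Vl : forall x, gmul (ginv x) x = gone;
  gmul_Vr : forall x, gmul x (ginv x) = gone
}.

Arguments gmul {g} _ _.
Arguments gone {g}.
Arguments ginv {g} _.

Fixpoint gpow {G : Group} (x : G) (n : nat) : G :=
  match n with O => gone | S k => gmul x (gpow x k) end.

Definition torsion_free (G : Group) : Prop :=
  forall (x : G) (n : nat), 0 < n -> gpow x n = gone -> x = gone.

Fixpoint word_eval {G : Group} (w : list (G * bool)) : G :=
  match w with
  | [] => gone
  | (s, b) :: w' => gmul (if b then ginv s else s) (word_eval w')
  end.

Definition finitely_generated (G : Group) : Prop :=
  exists S : list G, forall g : G,
    exists w : list (G * bool), (forall p, In p w -> In (fst p) S) /\ word_eval w = g.

Definition is_normal_subgroup {G : Group} (N : G -> Prop) : Prop :=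
  N gone /\
  (forall x y, N x -> N y -> N (gmul x y)) /\
  (forall x, N x -> N (ginv x)) /\
  (forall g x, N x -> N (gmul (gmul g x) (ginv g))).

Definition finite_index {G : Group} (N : G -> Prop) : Prop :=
  exists reps : list G, forall x : G,
    exists r, In r reps /\ N (gmul (ginv r) x).

Definition residually_finite (G : Group) : Prop :=
  forall g : G, g <> gone ->
    exists N : G -> Prop, is_normal_subgroup N /\ finite_index N /\ ~ N g.

Definition is_hom {G : Group} (phi : G -> G) : Prop :=
  forall x y, phi (gmul x y) = gmul (phi x) (phi y).

Definition is_automorphism {G : Group} (phi : G -> G) : Prop :=
  is_hom phi /\ (forall x y, phi x = phi y -> x = y) /\ (forall y, exists x, phi x = y).

Definition twisted_conj {G : Group} (phi : G -> G) (x y : G) : Prop :=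
  exists h : G, y = gmul (gmul h x) (ginv (phi h)).

Definition reidemeister_finite {G : Group} (phi : G -> G) : Prop :=
  exists reps : list G, forall x : G, exists r, In r reps /\ twisted_conj phi r x.

Definition stab_phi {G : Group} (phi : G -> G) (g : G) (b : G) : Prop :=
  g = gmul (gmul b g) (ginv (phi b)).

(* Main.v *)
From HB Require Import structures.
From mathcomp Require Import all_boot all_fingroup cyclic.
From Stdlib Require Import ClassicalEpsilon Classical.
From Stdlib Require List.
Require Import Defs.
Set Implicit Arguments. Unset Strict Implicit. Unset Printing Implicit Defensive.

Module FinPart.
Local Open Scope group_scope.

Section Fin.
Variable gT : finGroupType.
Variable psi : gT -> gT.
Hypothesis psiM : forall x y, psi (x * y) = psi x * psi y.

Lemma psi1 : psi 1 = 1.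
Proof.
have := psiM 1 1; rewrite mulg1 => /(congr1 (mulg (psi 1)^-1)).
by rewrite mulVg mulgA mulVg mul1g => <-.
Qed.

Definition tw (x h : gT) : gT := h^-1 * x * psi h.

Lemma tw1 : tw^~ 1 =1 id.
Proof. by move=> x; rewrite /tw psi1 invg1 mul1g mulg1. Qed.

Lemma twM x : act_morph tw x.
Proof. move=> a b; rewrite /tw psiM invMg !mulgA. done. Qed.

Definition twact := TotalAction tw1 twM.

Lemma fix_ge (a y g : gT) : psi y = y -> a = y ^ g ->
  #|'C[a]| <= #|'Fix_([set: gT] | twact)[a]|.
Proof.
move=> fy ->.
set x0 := g^-1 * psi g.
have -> : #|'C[y ^ g]| = #|'C[y ^ g] :* x0| by rewrite card_rcoset.
apply: subset_leq_card; apply/subsetP => z /rcosetP [c Hc ->].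
rewrite inE in_setT /=; apply/afix1P; rewrite /= /tw.
move/cent1P: Hc => Hc.
rewrite /x0 !psiM /conjg.
have fi : psi g^-1 = (psi g)^-1.
  apply: (mulgI (psi g)); by rewrite -psiM !mulgV psi1.
rewrite fi fy.
have pa : (psi g)^-1 * (y * psi g) = x0^-1 * (y ^ g) * x0.
    rewrite /x0 /conjg invMg invgK !mulgA.
  by rewrite -(mulgA _ g g^-1) mulgV mulg1 -(mulgA _ g g^-1) mulgV mulg1.
rewrite pa -[g^-1 * (y * g)]/(y ^ g) -/x0; clearbody x0; move: (y ^ g) Hc => a0 Hc.
rewrite !mulgA mulgK -(mulgA _ c) Hc mulgA mulVg mul1g //.
Qed.

Lemma class_sum (y : gT) : \sum_(a in y ^: [set: gT]) #|'C[a]| = #|gT|.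
Proof.
rewrite (eq_bigr (fun _ => #|'C[y]|)); last first.
  by move=> a /imsetP [g _ ->]; rewrite cent1J cardJg.
rewrite sum_nat_const -index_cent1 setTI mulnC Lagrange ?subsetT //.
by rewrite cardsT.
Qed.

Lemma fin_count (ys reps : seq gT) :
  (forall y, y \in ys -> psi y = y) ->
  (forall i j, i < size ys -> j < size ys ->
     nth 1 ys i \in nth 1 ys j ^: [set: gT] -> i = j) ->
  (forall x, exists2 r, r \in reps & x \in orbit twact [set: gT] r) ->
  size ys <= size reps.
Proof.
move=> fixys ncj cov.
have acts : [acts [set: gT], on [set: gT] | twact].
  by apply/actsP => a _ x; rewrite !inE.
have FC := Frobenius_Cauchy acts.
have orbs : #|orbit twact [set: gT] @: [set: gT]| <= size reps.
  apply: (@leq_trans #|[set orbit twact [set: gT] r | r in reps]|).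
    apply: subset_leq_card; apply/subsetP => O /imsetP [x _ ->].
    have [r rin xr] := cov x.
    apply/imsetP; exists r => //.
    by apply/eqP; rewrite orbit_eq_mem.
  apply: (leq_trans (leq_imset_card _ _)).
  exact: card_size.
have CT : 0 < #|gT| by apply/card_gt0P; exists 1.
rewrite cardsT in FC.
rewrite -(leq_pmul2r CT); apply: (leq_trans _ (leq_mul orbs (leqnn _))); rewrite -FC.
pose C k := nth 1 ys k ^: [set: gT].
have -> : (size ys * #|gT|)%N = (\sum_(k < size ys) \sum_(a in C k) #|'C[a]|)%N.
  by rewrite (eq_bigr (fun _ => #|gT|)) ?sum_nat_const ?card_ord // => k _; rewrite class_sum.
rewrite (eq_bigr (fun k : 'I_(size ys) => \sum_a (if a \in C k then #|'C[a]| else 0)));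
  last by move=> k _; rewrite big_mkcond.
rewrite exchange_big /=.
rewrite [X in _ <= X](eq_bigl predT); last by move=> a; rewrite in_setT.
apply: leq_sum => a _.
rewrite -big_mkcond /=.
case: (pickP (fun k : 'I_(size ys) => a \in C k)) => [k0 ak0|none]; last first.
  by rewrite big_pred0.
rewrite (big_pred1 k0); last first.
  move=> k; apply/idP/eqP => [ak|->//].
  apply: val_inj; apply: (ncj _ _ (ltn_ord k) (ltn_ord k0)).
  rewrite class_sym; move: ak; rewrite /C => /class_eqP <-.
  by rewrite class_sym.
move: ak0; rewrite /C => /imsetP [g _ ->].
apply: (fix_ge (y := nth 1 ys k0) (g := g)) => //.
by apply: fixys; apply: mem_nth.
Qed.
End Fin.

End FinPart.
Import FinPart.


Section GT.
Variable G : Group.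
Local Notation "x ** y" := (@gmul G x y) (at level 40, left associativity).
Local Notation "x ^-1" := (@ginv G x).
Local Notation one := (@gone G).

Lemma mA x y z : x ** (y ** z) = x ** y ** z. Proof. exact: gmul_assoc. Qed.
Lemma m1l x : one ** x = x. Proof. exact: gmul_1l. Qed.
Lemma m1r x : x ** one = x. Proof. exact: gmul_1r. Qed.
Lemma mVl x : x^-1 ** x = one. Proof. exact: gmul_Vl. Qed.
Lemma mVr x : x ** x^-1 = one. Proof. exact: gmul_Vr. Qed.
Lemma mKl x y : x^-1 ** (x ** y) = y. Proof. by rewrite mA mVl m1l. Qed.
Lemma mKVl x y : x ** (x^-1 ** y) = y. Proof. by rewrite mA mVr m1l. Qed.
Lemma mKr x y : x ** y ** y^-1 = x. Proof. by rewrite -mA mVr m1r. Qed.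
Lemma mKVr x y : x ** y^-1 ** y = x. Proof. by rewrite -mA mVl m1r. Qed.
Lemma mIl x y z : x ** y = x ** z -> y = z.
Proof. by move=> h; rewrite -(mKl x y) h mKl. Qed.
Lemma mIr x y z : y ** x = z ** x -> y = z.
Proof. by move=> h; rewrite -(mKr y x) h mKr. Qed.
Lemma invK x : (x^-1)^-1 = x.
Proof. by apply: (@mIl x^-1); rewrite mVr mVl. Qed.
Lemma invM x y : (x ** y)^-1 = y^-1 ** x^-1.
Proof. by apply: (@mIl (x ** y)); rewrite mVr -mA (mA y) mVr m1l mVr. Qed.
Lemma inv1 : one^-1 = one.
Proof. by apply: (@mIl one); rewrite mVr m1l. Qed.

Lemma hom1 (f : G -> G) : is_hom f -> f one = one.
Proof. by move=> h; apply: (@mIl (f one)); rewrite -h !m1r. Qed.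
Lemma homV (f : G -> G) : is_hom f -> forall x, f x^-1 = (f x)^-1.
Proof. by move=> h x; apply: (@mIl (f x)); rewrite -h !mVr hom1. Qed.

Lemma gpowD x a c : gpow x (a + c) = gpow x a ** gpow x c.
Proof. elim: a => [|a IH] /=; first by rewrite m1l. by rewrite IH mA. Qed.
Lemma gpow_hom (f : G -> G) : is_hom f -> forall x n, f (gpow x n) = gpow (f x) n.
Proof. move=> h x; elim=> [|n IH] /=; [exact: hom1 | by rewrite h IH]. Qed.

Section Norm.
Variable A : G -> Prop.
Hypothesis An : is_normal_subgroup A.
Lemma A1 : A one. Proof. by case: An. Qed.
Lemma AM x y : A x -> A y -> A (x ** y). Proof. by case: An => _ [h _]; apply: h. Qed.
Lemma AV x : A x -> A x^-1. Proof. by case: An => _ [_ [h _]]; apply: h. Qed.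
Lemma AJ g x : A x -> A (g ** x ** g^-1). Proof. by case: An => _ [_ [_ h]]; apply: h. Qed.
Lemma AVE x : A x^-1 -> A x. Proof. by move/AV; rewrite invK. Qed.
Lemma Apow x n : A x -> A (gpow x n).
Proof. by move=> ax; elim: n => [|n IH] /=; [exact: A1 | exact: AM]. Qed.

Definition cong x y := A (x^-1 ** y).
Lemma cong_refl x : cong x x. Proof. by rewrite /cong mVl; exact: A1. Qed.
Lemma cong_sym x y : cong x y -> cong y x.
Proof. by move=> h; apply: AVE; rewrite invM invK. Qed.
Lemma cong_trans x y z : cong x y -> cong y z -> cong x z.
Proof. by move=> h1 h2; have := AM h1 h2; rewrite -mA mKVl. Qed.
Lemma cong_ml l x y : cong x y -> cong (l ** x) (l ** y).
Proof. by rewrite /cong invM -mA mKl. Qed.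
Lemma cong_mr l x y : cong x y -> cong (x ** l) (y ** l).
Proof.
move=> h; have := AJ (l^-1) h; rewrite invK /cong invM -!mA. done.
Qed.
Lemma cong_M x x' y y' : cong x x' -> cong y y' -> cong (x ** y) (x' ** y').
Proof. move=> h1 h2; apply: cong_trans (cong_mr _ h1) (cong_ml _ h2). Qed.
Lemma cong_V x y : cong x y -> cong x^-1 y^-1.
Proof.
move=> h; have := AJ x (AV h); rewrite /cong invM invK mA mKr. done.
Qed.
Lemma cong1 x : cong one x <-> A x.
Proof. by rewrite /cong inv1 m1l. Qed.
End Norm.
End GT.



Definition asb (P : Prop) : bool := if excluded_middle_informative P then true else false.
Lemma asbP P : reflect P (asb P).
Proof. rewrite /asb; case: excluded_middle_informative => h; constructor => //. Qed.

Lemma pigeon (T : finType) (f : nat -> T) : exists i j, i < j /\ f i = f j.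
Proof.
apply: NNPP => H.
have inj : injective (fun i : 'I_#|T|.+1 => f i).
  move=> i j e; apply: val_inj => /=.
  case: (ltngtP i j) => // h; exfalso; apply: H.
    by exists i, j.
  by exists j, i.
by have := leq_card _ inj; rewrite card_ord ltnn.
Qed.

Section GT2.
Variable G : Group.
Local Notation "x ** y" := (@gmul G x y) (at level 40, left associativity).
Local Notation "x ^-1" := (@ginv G x).
Local Notation one := (@gone G).

Section FI.
Variable A : G -> Prop.
Hypothesis An : is_normal_subgroup A.
Variable L : list G.
Hypothesis Lrep : forall x, exists r, List.In r L /\ A (r^-1 ** x).
Local Notation Ln i := (List.nth i L one).
Local Notation K := (List.length L).

Definition cpred x : pred nat := fun i => (i < K) && asb (A ((Ln i)^-1 ** x)).
Lemma cpred_ex x : exists i, cpred x i.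
Proof.
have [r [rin ar]] := Lrep x.
have [i [il ei]] := List.In_nth _ _ one rin.
by exists i; rewrite /cpred; apply/andP; split; [apply/ltP | apply/asbP; rewrite ei].
Qed.
Definition cidx x := ex_minn (cpred_ex x).
Lemma cidx_spec x : cidx x < K /\ cong A (Ln (cidx x)) x.
Proof. by rewrite /cidx; case: ex_minnP => m /andP [h /asbP h2] _. Qed.
Lemma cidx_lt x : cidx x < K. Proof. by case: (cidx_spec x). Qed.
Lemma cidx_cong x : cong A (Ln (cidx x)) x. Proof. by case: (cidx_spec x). Qed.
Lemma cidx_le x y : cong A x y -> cidx y <= cidx x.
Proof.
move=> cxy; rewrite {1}/cidx; case: ex_minnP => m _ mmin; apply: mmin.
rewrite /cpred cidx_lt; apply/asbP.
exact: (cong_trans An (cidx_cong x) cxy).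
Qed.
Lemma cidx_eq x y : cong A x y -> cidx x = cidx y.
Proof.
move=> c; apply/eqP; rewrite eqn_leq !cidx_le //; exact: cong_sym.
Qed.
Lemma cidx_eqE x y : cidx x = cidx y -> cong A x y.
Proof.
move=> e; apply: (cong_trans An (cong_sym An (cidx_cong x))).
by rewrite e; apply: cidx_cong.
Qed.
Lemma K_gt0 : 0 < K.
Proof. by have := cidx_lt one; case: K. Qed.
End FI.

Lemma order_ex (A : G -> Prop) (b : G) : is_normal_subgroup A -> finite_index A ->
  exists m, 0 < m /\ forall n, A (gpow b n) <-> m %| n.
Proof.
move=> An [L Lrep].
have [i [j [ij e]]] := pigeon (fun n => Ordinal (cidx_lt Lrep (gpow b n))).
have e' : cidx Lrep (gpow b i) = cidx Lrep (gpow b j) by move: e => [].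
have c := cidx_eqE An e'.
have exn : exists n, (0 < n) && asb (A (gpow b n)).
  exists (j - i); rewrite subn_gt0 ij /=; apply/asbP.
  have ej : j = i + (j - i) by rewrite subnKC // ltnW.
  set d := j - i in ej *; move: c; rewrite /cong ej gpowD mKl //.
case: (ex_minnP exn) => m /andP [m0 /asbP Am] mmin.
exists m; split => // n; split => [An'|/dvdnP [q ->]]; last first.
  elim: q => [|q IH]; first by rewrite mul0n /=; apply: A1.
  by rewrite mulSn gpowD; apply: AM.
have Aq : A (gpow b (n %/ m * m)).
  elim: (n %/ m) => [|q IH]; first by rewrite mul0n /=; apply: A1.
  by rewrite mulSn gpowD; apply: AM.
have Ar : A (gpow b (n %% m)).
  move: An'; rewrite {1}(divn_eq n m) gpowD => h.
  by have := AM An (AV An Aq) h; rewrite mKl.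
apply/dvdnP; exists (n %/ m).
case r0: (n %% m) Ar => [|r] Ar; first by rewrite {1}(divn_eq n m) r0 addn0.
have := mmin r.+1; rewrite /= ; move/(_ (introT (asbP _) Ar)).
by rewrite -r0 leqNgt ltn_pmod.
Qed.

End GT2.



Section GT3.
Variable G : Group.
Local Notation "x ** y" := (@gmul G x y) (at level 40, left associativity).
Local Notation "x ^-1" := (@ginv G x).
Local Notation one := (@gone G).

Lemma fi_ext (A B : G -> Prop) : (forall x, A x <-> B x) -> finite_index A -> finite_index B.
Proof. move=> e [L h]; exists L => x; have [r [? ?]] := h x; exists r; split => //; exact/e. Qed.

Lemma fi_full : finite_index (fun _ : G => True).
Proof. by exists [:: one] => x; exists one; split => //; left. Qed.

Lemma fi_inter (A B : G -> Prop) : is_normal_subgroup A -> is_normal_subgroup B ->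
  finite_index A -> finite_index B -> finite_index (fun x => A x /\ B x).
Proof.
move=> An Bn [LA hA] [LB hB].
pose pk ra rb := epsilon (inhabits one) (fun c => A (ra^-1 ** c) /\ B (rb^-1 ** c)).
exists (List.flat_map (fun ra => List.map (fun rb => pk ra rb) LB) LA) => x.
have [ra [ia ax]] := hA x; have [rb [ib bx]] := hB x.
have sp : A (ra^-1 ** pk ra rb) /\ B (rb^-1 ** pk ra rb).
  by apply: (epsilon_spec (inhabits one) (fun c => A (ra^-1 ** c) /\ B (rb^-1 ** c))); exists x.
exists (pk ra rb); split.
  apply/(List.in_flat_map (fun ra0 => List.map (fun rb0 => pk ra0 rb0) LB)); exists ra; split => //.
  apply/List.in_map_iff; by exists rb.
case: sp => s1 s2; split.
  exact: (cong_trans An (cong_sym An s1) ax).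
exact: (cong_trans Bn (cong_sym Bn s2) bx).
Qed.

Lemma cong_mem (A : G -> Prop) : is_normal_subgroup A -> forall u x, cong A u x -> (A u <-> A x).
Proof.
move=> An u x c; split => h.
  by have := AM An h c; rewrite mKVl.
by have := AM An h (AV An c); rewrite invM invK mKVl.
Qed.

Section Code.
Variable S : list G.
Variable K : nat.
Definition letter (t : nat) (bb : bool) :=
  if bb then (List.nth t S one)^-1 else List.nth t S one.
Definition CT := ({ffun 'I_K.+1 * 'I_(List.length S) * bool -> 'I_K.+1} *
                  {ffun 'I_K.+1 -> bool} * 'I_K.+1)%type.
Definition code (A : G -> Prop) (L : list G)
  (Lr : forall x, exists r, List.In r L /\ A (r^-1 ** x)) : CT :=
  ([ffun p : 'I_K.+1 * 'I_(List.length S) * bool =>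
      inord (cidx Lr (letter p.1.2 p.2 ** List.nth p.1.1 L one))],
   [ffun a : 'I_K.+1 => asb (A (List.nth a L one))],
   inord (cidx Lr one)).

Lemma code_det (A B : G -> Prop) (LA LB : list G)
  (LrA : forall x, exists r, List.In r LA /\ A (r^-1 ** x))
  (LrB : forall x, exists r, List.In r LB /\ B (r^-1 ** x)) :
  is_normal_subgroup A -> is_normal_subgroup B ->
  List.length LA <= K -> List.length LB <= K ->
  code LrA = code LrB ->
  (forall g : G, exists w : list (G * bool),
      (forall p, List.In p w -> List.In (fst p) S) /\ word_eval w = g) ->
  forall x, A x <-> B x.
Proof.
move=> An Bn lA lB ec gen.
have walk : forall w : list (G * bool), (forall p, List.In p w -> List.In (fst p) S) ->
    exists a : 'I_K.+1, cong A (List.nth a LA one) (word_eval w) /\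
                        cong B (List.nth a LB one) (word_eval w).
  elim => [|[g bb] w IH] hw /=.
    exists (inord (cidx LrA one)).
    have e3 : inord (cidx LrA one) = inord (cidx LrB one) :> 'I_K.+1 by move: ec => [].
    split.
      rewrite inordK; first exact: cidx_cong.
      by apply: (leq_trans (cidx_lt LrA one)); apply: (leq_trans lA).
    rewrite e3 inordK; first exact: cidx_cong.
    by apply: (leq_trans (cidx_lt LrB one)); apply: (leq_trans lB).
  have [a [ca cb]] := IH (fun p hp => hw p (or_intror hp)).
  have [t [tl et]] := List.In_nth _ _ one (hw (g, bb) (or_introl erefl)).
  have tl' : t < List.length S by apply/ltP.
  pose p := (a, Ordinal tl', bb).
  have e1 : (code LrA).1.1 p = (code LrB).1.1 p by rewrite ec.
  rewrite /code /= !ffunE /= in e1.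
  have le : letter t bb = if bb then g^-1 else g by rewrite /letter /= et.
  rewrite le in e1.
  exists (inord (cidx LrA ((if bb then g^-1 else g) ** List.nth a LA one))).
  split.
    rewrite inordK; last first.
      by apply: (leq_trans (cidx_lt LrA _)); apply: (leq_trans lA).
    apply: (cong_trans An (cidx_cong LrA _)); exact: cong_ml.
  rewrite e1 inordK; last first.
    by apply: (leq_trans (cidx_lt LrB _)); apply: (leq_trans lB).
  apply: (cong_trans Bn (cidx_cong LrB _)); exact: cong_ml.
move=> x; have [w [hw ew]] := gen x.
have [a [ca cb]] := walk w hw; rewrite ew in ca cb.
have e2 : (code LrA).1.2 a = (code LrB).1.2 a by rewrite ec.
rewrite /code /= !ffunE in e2.
rewrite -(cong_mem An ca) -(cong_mem Bn cb).
by split => h; [move/asbP: h; rewrite e2 => /asbP | move/asbP: h; rewrite -e2 => /asbP].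
Qed.
End Code.

Definition good (phi : G -> G) (M : G -> Prop) :=
  is_normal_subgroup M /\ finite_index M /\ (forall x, M x -> M (phi x)).

Lemma iter_hom (f : G -> G) : is_hom f -> forall t, is_hom (iter t f).
Proof. by move=> h; elim=> [|t IH] x y //=; rewrite IH h. Qed.
Lemma iter_surj (f : G -> G) : (forall y, exists x, f x = y) -> forall t y, exists x, iter t f x = y.
Proof.
move=> s; elim=> [|t IH] y /=; first by exists y.
have [z <-] := s y; have [x <-] := IH z; by exists x.
Qed.

Lemma normal_pre (f : G -> G) (A : G -> Prop) : is_hom f -> is_normal_subgroup A ->
  is_normal_subgroup (fun x => A (f x)).
Proof.
move=> h An; split; first by rewrite hom1 //; apply: (A1 An).
split; first by move=> x y ax ay; rewrite h; apply: AM.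
split; first by move=> x ax; rewrite homV //; apply: AV.
by move=> g x ax; rewrite !h homV //; apply: AJ.
Qed.

Lemma invariantize (phi : G -> G) : is_automorphism phi -> finitely_generated G ->
  forall N : G -> Prop, is_normal_subgroup N -> finite_index N ->
  exists M, good phi M /\ forall x, M x -> N x.
Proof.
move=> [ph [pinj psurj]] [S gen] N Nn [L Lr].
pose K := List.length L.
pose pre t y := epsilon (inhabits one) (fun x => iter t phi x = y).
have preP : forall t y, iter t phi (pre t y) = y.
  by move=> t y; apply: (epsilon_spec (inhabits one) (fun x => iter t phi x = y)); apply: iter_surj.
have ih := iter_hom ph.
have Lrt : forall t x, exists r, List.In r (List.map (pre t) L) /\ N (iter t phi (r^-1 ** x)).
  move=> t x; have [r [rin hr]] := Lr (iter t phi x).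
  exists (pre t r); split; first by apply: List.in_map.
  by rewrite ih homV // preP.
pose c t := @code S K (fun x => N (iter t phi x)) _ (Lrt t).
have [i [j [ij eij]]] := pigeon c.
have Nt : forall t, is_normal_subgroup (fun x => N (iter t phi x)).
  by move=> t; apply: normal_pre.
have eq_ij : forall x, N (iter i phi x) <-> N (iter j phi x).
  apply: (code_det (Nt i) (Nt j) _ _ eij gen).
    by rewrite List.length_map.
  by rewrite List.length_map.
pose d := j - i.
have d0 : 0 < d by rewrite subn_gt0.
have per : forall y, N y <-> N (iter d phi y).
  move=> y; have [x <-] := iter_surj psurj i y.
  by rewrite -iterD subnK ?(ltnW ij) //; apply: eq_ij.
pose M x := forall t, t < d -> N (iter t phi x).
exists M; split; last by move=> x Mx; exact: (Mx 0 d0).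
split.
  split; first by move=> t _; rewrite hom1 //; apply: (A1 Nn).
  split; first by move=> x y mx my t td; rewrite ih; apply: (AM Nn); [exact: mx | exact: my].
  split; first by move=> x mx t td; rewrite homV //; apply: (AV Nn); exact: mx.
  by move=> g x mx t td; rewrite !ih homV //; apply: (AJ Nn); exact: mx.
split; last first.
  move=> x Mx t td; rewrite -iterSr.
  case: (ltngtP t.+1 d) => h.
  - exact: Mx.
  - by rewrite ltnNge td in h.
  - by rewrite h; apply: (per x).1; exact: (Mx 0 d0).
have : forall k, finite_index (fun x => forall t, t < k -> N (iter t phi x)).
  elim=> [|k IH].
    by apply: (fi_ext _ fi_full) => x; split => // _ t.
  apply: (fi_ext (A := fun x => (forall t, t < k -> N (iter t phi x)) /\ N (iter k phi x))).
    move=> x; split => [[h1 h2] t|h]; last by split => [t tk|]; apply: h => //; apply: ltnW.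
    rewrite ltnS leq_eqVlt => /orP [/eqP ->|] //; exact: h1.
  apply: fi_inter => //.
    split; first by move=> t _; rewrite hom1 //; apply: (A1 Nn).
    split; first by move=> x y mx my t td; rewrite ih; apply: (AM Nn); [exact: mx | exact: my].
    split; first by move=> x mx t td; rewrite homV //; apply: (AV Nn); exact: mx.
    by move=> g x mx t td; rewrite !ih homV //; apply: (AJ Nn); exact: mx.
  by exists (List.map (pre k) L).
by apply.
Qed.
End GT3.



Section Quot.
Variable G : Group.
Local Notation "x ** y" := (@gmul G x y) (at level 40, left associativity).
Local Notation "x ^-1" := (@ginv G x) : type_scope.
Local Notation one := (@gone G).
Variable M : G -> Prop.
Hypothesis Mn : is_normal_subgroup M.
Variable L : list G.
Hypothesis Lr : forall x, exists r, List.In r L /\ M (ginv r ** x).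
Local Notation Ln i := (List.nth i L one).

Definition QT := {i : 'I_(List.length L) | cidx Lr (Ln i) == i}.
HB.instance Definition _ := Finite.copy QT {i : 'I_(List.length L) | cidx Lr (Ln i) == i}.
Lemma q_proof x : cidx Lr (Ln (cidx Lr x)) == cidx Lr x.
Proof. by apply/eqP; apply: cidx_eq (cidx_cong Lr x). Qed.
Definition q (x : G) : QT := exist _ (Ordinal (cidx_lt Lr x)) (q_proof x).
Definition rep (a : QT) : G := Ln (val (val a)).
Lemma q_rep a : q (rep a) = a.
Proof. apply: val_inj; apply: val_inj => /=; rewrite /rep; exact: (eqP (valP a)). Qed.
Lemma q_eq x y : q x = q y <-> cong M x y.
Proof.
split => [e|c]; first by apply: (cidx_eqE Mn); move: e => [].
by apply: val_inj; apply: val_inj => /=; apply: cidx_eq.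
Qed.
Lemma rep_cong x : cong M (rep (q x)) x.
Proof. exact: cidx_cong. Qed.

Definition mulQ (a b : QT) := q (rep a ** rep b).
Definition oneQ := q one.
Definition invQ (a : QT) := q (ginv (rep a)).
Lemma qM x y : mulQ (q x) (q y) = q (x ** y).
Proof. by apply/q_eq; apply: cong_M => //; apply: rep_cong. Qed.
Lemma qV x : invQ (q x) = q (ginv x).
Proof. by apply/q_eq; apply: cong_V => //; apply: rep_cong. Qed.
Lemma mulQA : associative mulQ.
Proof. by move=> a b c; rewrite -[a]q_rep -[b]q_rep -[c]q_rep !qM mA. Qed.
Lemma mulQ1 : left_id oneQ mulQ.
Proof. by move=> a; rewrite -[a]q_rep /oneQ qM m1l. Qed.
Lemma mulQV : left_inverse oneQ invQ mulQ.
Proof. by move=> a; rewrite -[a]q_rep qV qM mVl. Qed.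

HB.instance Definition _ := Finite_isGroup.Build QT mulQA mulQ1 mulQV.

Lemma qMg x y : (q x * q y)%g = q (x ** y). Proof. exact: qM. Qed.
Variable phi : G -> G.
Hypothesis ph : is_hom phi.
Hypothesis Minv : forall x, M x -> M (phi x).

Definition psiQ (a : QT) : QT := q (phi (rep a)).
Lemma psiQq x : psiQ (q x) = q (phi x).
Proof.
apply/q_eq => //; have := Minv (rep_cong x).
by rewrite /cong ph homV.
Qed.
Lemma psiQM a b : psiQ (a * b)%g = (psiQ a * psiQ b)%g.
Proof. rewrite [(psiQ a * psiQ b)%g]qMg -ph; exact: psiQq. Qed.
Lemma qX x n : q (gpow x n) = (q x ^+ n)%g.
Proof. elim: n => [|n IH] //=; by rewrite expgS -IH qMg. Qed.
Lemma q1 x : (q x = 1)%g <-> M x.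
Proof.
have -> : (1 : QT)%g = q one by [].
split => h.
  have c : cong M one x by apply/(q_eq one x); rewrite h.
  by apply/(cong1 M x).
by apply: esym; apply/(q_eq one x); apply/(cong1 M x).
Qed.

Lemma in_map_q (r : G) (s : list G) : List.In r s -> q r \in map q s.
Proof. elim: s => [|a s IH] //= [->|h]; rewrite in_cons ?eqxx //; by rewrite IH ?orbT. Qed.
Lemma size_len (s : list G) : size s = List.length s.
Proof. by elim: s => //= a s ->. Qed.

Lemma quot_bound (b : G) (reps : list G) (es : seq nat) :
  phi b = b ->
  (forall x, exists r, List.In r reps /\ twisted_conj phi r x) ->
  uniq es -> (forall e, e \in es -> forall n, M (gpow b n) -> e %| n) ->
  size es <= List.length reps.
Proof.
move=> fb hreps ues hes.
pose be := q b.
pose ys := map (fun e => (be ^+ e)%g) es.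
have := @fin_count _ psiQ psiQM ys (map q reps).
rewrite size_map size_map size_len; apply.
- move=> y /mapP [e _ ->]; by rewrite /be -qX psiQq gpow_hom // fb.
- move=> i j il jl.
  rewrite !(nth_map 0) // => /imsetP [h _ eh].
  set ei := nth 0 es i in eh; set ej := nth 0 es j in eh.
  have key : forall n, (be ^+ (ei * n) == 1)%g = (be ^+ (ej * n) == 1)%g.
    by move=> n; rewrite !expgM eh -conjXg conjg_eq1.
  have bo : forall n, M (gpow b n) <-> (#[be]%g %| n)%N.
    move=> n; rewrite -q1 qX -/be order_dvdn; split => [->|/eqP //]; exact: eqxx.
  have dv : forall e, e \in es -> (e %| #[be]%g)%N.
    by move=> e ein; apply: (hes e ein); apply/bo.
  have o0 := order_gt0 be.
  have ab : forall e1 e2, e1 \in es -> e2 \in es ->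
      (forall n, (be ^+ (e1 * n) == 1)%g = (be ^+ (e2 * n) == 1)%g) -> (e2 %| e1)%N.
    move=> e1 e2 i1 i2 k.
    have [t et] := dvdnP (dv e2 i2).
    have t0 : 0 < t by move: o0; rewrite et muln_gt0 => /andP [].
    rewrite -(dvdn_pmul2r t0) [(e2 * t)%N]mulnC -et order_dvdn k mulnC -et expg_order eqxx //.
  have ei_in : ei \in es by apply: mem_nth.
  have ej_in : ej \in es by apply: mem_nth.
  have e12 : ei = ej.
    apply/eqP; rewrite eqn_dvd; apply/andP; split.
      by apply: (ab ej ei) => // n; rewrite key.
    by apply: (ab ei ej) => // n; rewrite key.
  by apply/eqP; rewrite -(nth_uniq 0 il jl ues) -/ei -/ej e12.
- move=> x; have [r [rin [h eh]]] := hreps (rep x).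
  exists (q r); first exact: in_map_q.
  have -> : x = tw psiQ (q r) (q (ginv h)).
    rewrite /tw psiQq homV // -[x]q_rep eh.
    rewrite -[((q (ginv h))^-1)%g]/(invQ (q (ginv h))) qV invK !qMg //.
    apply/q_eq; apply: (cong_M Mn); last exact: cong_refl.
    by apply: (cong_M Mn); apply: (cong_sym Mn); apply: rep_cong.
  apply: (mem_orbit (twact psiQM)); exact: in_setT.
Qed.
End Quot.


Section Main.
Variable G : Group.
Local Notation "x ** y" := (@gmul G x y) (at level 40, left associativity).
Local Notation "x ^-1" := (@ginv G x) : type_scope.
Local Notation one := (@gone G).

Lemma normal_inter (A B : G -> Prop) : is_normal_subgroup A -> is_normal_subgroup B ->
  is_normal_subgroup (fun x => A x /\ B x).
Proof.
move=> An Bn; split; first by split; [apply: (A1 An) | apply: (A1 Bn)].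
split; first by move=> x y [? ?] [? ?]; split; [apply: (AM An) | apply: (AM Bn)].
split; first by move=> x [? ?]; split; [apply: (AV An) | apply: (AV Bn)].
by move=> g x [? ?]; split; [apply: (AJ An) | apply: (AJ Bn)].
Qed.

Lemma normal_full : is_normal_subgroup (fun _ : G => True).
Proof. by []. Qed.

Lemma chain (phi : G -> G) : is_automorphism phi -> finitely_generated G ->
  residually_finite G -> torsion_free G -> forall b : G, b <> one ->
  forall k, exists M, good phi M /\ exists es : seq nat, size es = k.+1 /\ uniq es /\
    forall e, e \in es -> forall n, M (gpow b n) -> (e %| n)%N.
Proof.
move=> aut fg rf tf b nb; elim=> [|k [M [[Mn [Mfi Minv]] [es [ses [ues hes]]]]]].
  exists (fun _ => True); split; first by split; [exact: normal_full | split; [exact: fi_full|]].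
  exists [:: 1%N]; split => //; split => // e; rewrite inE => /eqP -> n _; apply: dvd1n.
have [m [m0 hm]] := order_ex b Mn Mfi.
have bm : gpow b m <> one.
  by move=> e; apply: nb; apply: (tf b m) => //; apply/ltP.
have [N [Nn [Nfi nN]]] := rf _ bm.
have [N' [[N'n [N'fi N'inv]] sN]] := invariantize aut fg Nn Nfi.
pose M' x := M x /\ N' x.
have M'n : is_normal_subgroup M' by apply: normal_inter.
have M'fi : finite_index M' by apply: fi_inter.
have [m' [m'0 hm']] := order_ex b M'n M'fi.
exists M'; split.
  split => //; split => // x [h1 h2]; split; [exact: Minv | exact: N'inv].
exists (m' :: es); split; first by rewrite /= ses.
split.
  rewrite /= ues andbT; apply/negP => m'in.
  have d1 : (m' %| m)%N by apply: (hes _ m'in); apply/hm.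
  have [h1 _] : M' (gpow b m') by apply/hm'.
  have d2 : (m %| m')%N by apply/hm.
  have e : m = m' by apply/eqP; rewrite eqn_dvd d1 d2.
  have [_ h2] : M' (gpow b m) by apply/hm'; rewrite e.
  by apply: nN; apply: sN.
move=> e; rewrite inE => /orP [/eqP ->|ein] n hn; first by apply/hm'.
by apply: (hes e ein); case: hn.
Qed.

Lemma core (phi : G -> G) : is_automorphism phi -> finitely_generated G ->
  residually_finite G -> torsion_free G -> reidemeister_finite phi ->
  forall b, phi b = b -> b = one.
Proof.
move=> aut fg rf tf [reps hr] b fb; apply: NNPP => nb.
have [M [[Mn [[L Lr] Minv]] [es [ses [ues hes]]]]] :=
  chain aut fg rf tf nb (List.length reps).
have := quot_bound Mn Lr (proj1 aut) Minv fb hr ues hes.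
by rewrite ses ltnn.
Qed.
End Main.

Unset Implicit Arguments.
Theorem mainTheorem11 (G : Group) (phi : G -> G) :
  torsion_free G -> finitely_generated G -> residually_finite G ->
  is_automorphism phi -> reidemeister_finite phi ->
  forall g b : G, stab_phi phi g b -> b = gone.
Proof.
move=> tf fg rf [ph [pinj psurj]] [reps hr] g b st.
pose phi' x := gmul (gmul g (phi x)) (ginv g).
have ph' : is_hom phi'.
  by move=> x y; rewrite /phi' ph !mA mKVr.
have aut' : is_automorphism phi'.
  split => //; split.
    move=> x y; rewrite /phi' => e; apply: pinj.
    by move: (mIr e) => /mIl.
  move=> y; have [x ex] := psurj (gmul (gmul (ginv g) y) g).
  by exists x; rewrite /phi' ex !mA mVr m1l mKr.
have fb : phi' b = b.
  move: st; rewrite /stab_phi => st.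
  by rewrite /phi' {1}st mKVr mKr.
have rf' : reidemeister_finite phi'.
  exists (List.map (fun r => gmul r (ginv g)) reps) => x.
  have [r [rin [h eh]]] := hr (gmul x g).
  exists (gmul r (ginv g)); split; first by apply: List.in_map.
  exists h; rewrite /phi' !invM invK !mA mKVr -eh mKr //.
exact (core aut' fg rf tf rf' fb).
Qed.
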